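(* Let $E\subseteq\omega_1$ be stationary and $T$ an SS Aronszajn tree. Let $\langle x_\alpha:\alpha\in E\rangle$ be a sequence of finite antichains of $T$. Then there is a stationary $E'\subseteq E$ such that $\bigcup_{\alpha\in E'}x_\alpha$ is an antichain of $T$.
   Context: An Aronszajn tree is a tree of height $\omega_1$ all of whose levels and chains are countable. A subset $X\subseteq T$ is stationary if $\{\mathrm{ht}(t):t\in X\}$ is stationary in $\omega_1$. $T$ is SS if every stationary subset of $T$ contains a stationary antichain. *)

(* Defs.v *)
(* omega_1 is modelled abstractly as a strictly well-ordered
   type (I, lt) that is uncountable and all of whose proper initial segments
   are countable; this characterizes omega_1 up to order-isomorphism. *)
From Stdlib Require Import List.

Definition countable {X : Type} (P : X -> Prop) : Prop :=
  exists f : X -> nat, forall x y, P x -> P y -> f x = f y -> x = y.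

Definition finite_set {X : Type} (P : X -> Prop) : Prop :=
  exists l : list X, forall x, P x -> In x l.

Definition is_omega1 (I : Type) (lt : I -> I -> Prop) : Prop :=
  (forall a, ~ lt a a) /\
  (forall a b c, lt a b -> lt b c -> lt a c) /\
  (forall a b, a = b \/ lt a b \/ lt b a) /\
  well_founded lt /\
  ~ countable (fun _ : I => True) /\
  (forall a, countable (fun b => lt b a)).

Definition unbounded {I : Type} (lt : I -> I -> Prop) (C : I -> Prop) : Prop :=
  forall a, exists b, lt a b /\ C b.

Definition closed {I : Type} (lt : I -> I -> Prop) (C : I -> Prop) : Prop :=
  forall a, (exists b, lt b a) ->
    (forall b, lt b a -> exists g, lt b g /\ lt g a /\ C g) -> C a.

Definition club {I : Type} (lt : I -> I -> Prop) (C : I -> Prop) : Prop :=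
  closed lt C /\ unbounded lt C.

Definition stationary {I : Type} (lt : I -> I -> Prop) (S : I -> Prop) : Prop :=
  forall C, club lt C -> exists a, S a /\ C a.

(* Trees.  tlt is the strict tree order on T.  [is_height lt tlt t a]:
   the set of tlt-predecessors of t is order-isomorphic (via f) to the
   initial segment {b | lt b a}, i.e. ht(t) = a. *)
Definition is_height {I T : Type} (lt : I -> I -> Prop) (tlt : T -> T -> Prop)
    (t : T) (a : I) : Prop :=
  exists f : T -> I,
    (forall s, tlt s t -> lt (f s) a) /\
    (forall b, lt b a -> exists s, tlt s t /\ f s = b) /\
    (forall s s', tlt s t -> tlt s' t -> f s = f s' -> s = s') /\
    (forall s s', tlt s t -> tlt s' t -> (tlt s s' <-> lt (f s) (f s'))).

Definition chain {T : Type} (tlt : T -> T -> Prop) (X : T -> Prop) : Prop :=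
  forall s t, X s -> X t -> s = t \/ tlt s t \/ tlt t s.

Definition antichain {T : Type} (tlt : T -> T -> Prop) (X : T -> Prop) : Prop :=
  forall s t, X s -> X t -> s <> t -> ~ tlt s t /\ ~ tlt t s.

Definition aronszajn {I T : Type} (lt : I -> I -> Prop) (tlt : T -> T -> Prop)
    : Prop :=
  (forall t, ~ tlt t t) /\
  (forall r s t, tlt r s -> tlt s t -> tlt r t) /\
  (forall t, exists a, is_height lt tlt t a) /\
  (forall a, exists t, is_height lt tlt t a) /\
  (forall a, countable (fun t => is_height lt tlt t a)) /\
  (forall X, chain tlt X -> countable X).

Definition stationary_in_tree {I T : Type} (lt : I -> I -> Prop)
    (tlt : T -> T -> Prop) (X : T -> Prop) : Prop :=
  stationary lt (fun a => exists t, X t /\ is_height lt tlt t a).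

Definition SS {I T : Type} (lt : I -> I -> Prop) (tlt : T -> T -> Prop) : Prop :=
  forall X, stationary_in_tree lt tlt X ->
    exists Y, (forall t, Y t -> X t) /\ antichain tlt Y /\
              stationary_in_tree lt tlt Y.

(* Main.v *)
Require Import Defs.
From Stdlib Require Import List Arith Lia Classical ClassicalEpsilon Cantor.

Definition emi := excluded_middle_informative.
Definition cid {A : Type} {P : A -> Prop} (H : exists x, P x) : {x | P x} := constructive_indefinite_description P H.

Lemma countable_sub {X} (P Q : X -> Prop) :
  (forall x, P x -> Q x) -> countable Q -> countable P.
Proof. intros H [f Hf]. exists f. intros; apply Hf; auto. Qed.

Lemma countable_union {X} (P : nat -> X -> Prop) :
  (forall n, countable (P n)) -> countable (fun x => exists n, P n x).
Proof.
  intros H.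
  set (F := fun n => proj1_sig (cid (H n))).
  assert (HF : forall n x y, P n x -> P n y -> F n x = F n y -> x = y).
  { intro n. unfold F. destruct (cid (H n)) as [f Hf]; simpl. exact Hf. }
  exists (fun x => match emi (exists n, P n x) with
          | left Hx => Cantor.to_nat (proj1_sig (cid Hx), F (proj1_sig (cid Hx)) x)
          | right _ => 0 end).
  intros x y Hx Hy.
  destruct (emi (exists n, P n x)) as [Hx'|]; [|contradiction].
  destruct (emi (exists n, P n y)) as [Hy'|]; [|contradiction].
  destruct (cid Hx') as [n Hn].
  destruct (cid Hy') as [m Hm]. cbv beta iota zeta. unfold proj1_sig.
  intro E. apply Cantor.to_nat_inj in E. injection E as E1 E2. subst m.
  eapply HF; eauto.
Qed.

Lemma club_ext {I} (lt : I -> I -> Prop) (C D : I -> Prop) :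
  (forall x, C x <-> D x) -> club lt C -> club lt D.
Proof.
  intros H [Hc Hu]. split.
  - intros a Ha Hcof. apply H, Hc; auto. intros b Hb.
    destruct (Hcof b Hb) as [g [? [? ?]]]. exists g. rewrite H; auto.
  - intros a. destruct (Hu a) as [b [? ?]]. exists b. rewrite <- H; auto.
Qed.

Lemma stat_mono {I} (lt : I -> I -> Prop) (S S' : I -> Prop) :
  (forall x, S x -> S' x) -> stationary lt S -> stationary lt S'.
Proof. intros H HS C HC. destruct (HS C HC) as [a [? ?]]. eauto. Qed.

Section Omega1.
Variable I : Type.
Variable lt : I -> I -> Prop.
Hypothesis Hw1 : is_omega1 I lt.

Definition ile a b := lt a b \/ a = b.

Lemma lt_irr a : ~ lt a a.
Proof. destruct Hw1 as [H _]; auto. Qed.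
Lemma lt_tr a b c : lt a b -> lt b c -> lt a c.
Proof. destruct Hw1 as [_ [H _]]; eauto. Qed.
Lemma lt_tri a b : a = b \/ lt a b \/ lt b a.
Proof. destruct Hw1 as [_ [_ [H _]]]; auto. Qed.
Lemma ilt_wf : well_founded lt.
Proof. destruct Hw1 as [_ [_ [_ [H _]]]]; auto. Qed.
Lemma I_unc : ~ countable (fun _ : I => True).
Proof. destruct Hw1 as [_ [_ [_ [_ [H _]]]]]; auto. Qed.
Lemma seg_cnt a : countable (fun b => lt b a).
Proof. destruct Hw1 as [_ [_ [_ [_ [_ H]]]]]; auto. Qed.

Lemma nlt_ile a b : ~ lt a b -> ile b a.
Proof. intro H. destruct (lt_tri a b) as [->|[|]]; unfold ile; tauto. Qed.

Lemma ile_lt_tr a b c : ile a b -> lt b c -> lt a c.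
Proof. intros [H| ->] H2; eauto using lt_tr. Qed.
Lemma lt_ile_tr a b c : lt a b -> ile b c -> lt a c.
Proof. intros H [H2| <-]; eauto using lt_tr. Qed.

Lemma ile_cnt a : countable (fun b => ile b a).
Proof.
  destruct (seg_cnt a) as [f Hf].
  exists (fun b => match emi (b = a) with left _ => 0 | right _ => S (f b) end).
  intros x y Hx Hy.
  destruct (emi (x = a)), (emi (y = a)); try congruence; intro E; try discriminate.
  injection E as E. destruct Hx; [|congruence]. destruct Hy; [|congruence]. auto.
Qed.

Lemma no_max a : exists b, lt a b.
Proof.
  apply NNPP; intro H. apply I_unc.
  apply (countable_sub _ _ (fun x _ => x) (ile_cnt a)) || idtac.
  eapply countable_sub; [|apply (ile_cnt a)].
  intros x _. apply nlt_ile. intro. apply H; eauto.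
Qed.

Lemma seq_bounded (s : nat -> I) : exists a, forall k, lt (s k) a.
Proof.
  apply NNPP; intro H. apply I_unc.
  eapply countable_sub; [|apply (countable_union (fun k b => ile b (s k)))].
  - intros x _. apply NNPP; intro H2. apply H. exists x. intro k.
    apply NNPP; intro H3. apply H2. exists k. apply nlt_ile; auto.
  - intro. apply ile_cnt.
Qed.

Lemma least (P : I -> Prop) : (exists x, P x) -> exists m, P m /\ forall y, P y -> ile m y.
Proof.
  intros [x Hx]. apply NNPP; intro H.
  assert (forall z, ~ P z).
  { intro z. induction z as [z IH] using (well_founded_ind ilt_wf).
    intro Pz. apply H. exists z. split; auto. intros y Py.
    apply nlt_ile. intro Hyz. exact (IH y Hyz Py). }
  exact (H0 x Hx).
Qed.

Lemma sup_seq (s : nat -> I) : exists l, (forall k, lt (s k) l) /\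
  (forall b, lt b l -> exists k, ile b (s k)).
Proof.
  destruct (least (fun l => forall k, lt (s k) l) (seq_bounded s)) as [l [H1 H2]].
  exists l. split; auto. intros b Hb. apply NNPP; intro H.
  assert (forall k, lt (s k) b).
  { intro k. apply NNPP; intro H3. apply H. exists k. apply nlt_ile; auto. }
  specialize (H2 b H0). apply (lt_irr b). eapply lt_ile_tr; eauto.
Qed.

Lemma incr_mono (s : nat -> I) : (forall k, lt (s k) (s (S k))) ->
  forall k j, k < j -> lt (s k) (s j).
Proof.
  intros H k j Hkj. induction Hkj; auto. eauto using lt_tr.
Qed.

Lemma club_sup (s : nat -> I) l (C : I -> Prop) :
  (forall k, lt (s k) (s (S k))) -> (forall k, lt (s k) l) ->
  (forall b, lt b l -> exists k, ile b (s k)) -> closed lt C ->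
  (forall k, exists j, k < j /\ C (s j)) -> C l.
Proof.
  intros Hinc Hub Hsup Hc Hcof. apply Hc.
  - exists (s 0); auto.
  - intros b Hb. destruct (Hsup b Hb) as [k Hk].
    destruct (Hcof k) as [j [Hj HC]]. exists (s j). repeat split; auto.
    eapply ile_lt_tr; eauto using incr_mono.
Qed.

Lemma club_cinter (C : nat -> I -> Prop) : (forall n, club lt (C n)) ->
  club lt (fun x => forall n, C n x).
Proof.
  intro HC. split.
  - intros a Ha Hcof n. destruct (HC n) as [Hc _]. apply Hc; auto.
    intros b Hb. destruct (Hcof b Hb) as [g [? [? ?]]]. eauto.
  - intro a.
    assert (Hn : forall n b, exists c, lt b c /\ C n c).
    { intros n b. destruct (HC n) as [_ Hu]. apply Hu. }
    set (nx := fun n b => proj1_sig (cid (Hn n b))).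
    assert (Hnx : forall n b, lt b (nx n b) /\ C n (nx n b)).
    { intros n b. unfold nx. destruct (cid (Hn n b)); auto. }
    set (s := fix s k := match k with 0 => a | S k => nx (fst (Cantor.of_nat k)) (s k) end).
    assert (Hinc : forall k, lt (s k) (s (S k))) by (intro k; apply Hnx).
    destruct (sup_seq s) as [l [Hub Hsup]].
    exists l. split; [apply (Hub 0)|].
    intro n. apply (club_sup s l); auto. apply (HC n).
    intro k. exists (S (Cantor.to_nat (n, k))). split.
    + pose proof (Cantor.to_nat_non_decreasing n k). lia.
    + change (C n (nx (fst (Cantor.of_nat (Cantor.to_nat (n, k)))) (s (Cantor.to_nat (n, k))))).
      rewrite Cantor.cancel_of_to. apply Hnx.
Qed.

Lemma club_true : club lt (fun _ => True).
Proof. split. - intros a _ _; constructor. - intro a. destruct (no_max a) as [b]; eauto. Qed.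

Lemma club_inter2 C D : club lt C -> club lt D -> club lt (fun x => C x /\ D x).
Proof.
  intros HC HD.
  apply (club_ext _ (fun x => forall n, (match n with 0 => C | _ => D end) x)).
  - intro x. split.
    + intro H. split; [apply (H 0)|apply (H 1)].
    + intros [] [|]; auto.
  - apply club_cinter. intros [|]; auto.
Qed.

Lemma club_pinter (P : I -> Prop) (C : I -> I -> Prop) : countable P ->
  (forall g, P g -> club lt (C g)) -> club lt (fun x => forall g, P g -> C g x).
Proof.
  intros [f Hf] HC.
  apply (club_ext _ (fun x => forall n g, P g -> f g = n -> C g x)).
  - intro x. split; intros H; [intros g Pg; eapply H; eauto|intros; auto].
  - apply club_cinter. intro n.
    destruct (classic (exists g, P g /\ f g = n)) as [[g [Pg Eg]]|Hno].
    + apply (club_ext _ (C g)); [|auto].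
      intro x. split.
      * intros H g' Pg' Eg'. assert (g' = g) by (apply Hf; congruence). subst; auto.
      * intro H. apply H; auto.
    + apply (club_ext _ (fun _ => True)); [|apply club_true].
      intro x. split; auto. intros _ g Pg Eg. exfalso. eauto.
Qed.

Lemma club_diag (C : I -> I -> Prop) : (forall g, club lt (C g)) ->
  club lt (fun a => forall g, lt g a -> C g a).
Proof.
  intro HC. split.
  - intros a Ha Hcof g Hg. destruct (HC g) as [Hc _]. apply Hc; auto.
    intros b Hb. destruct (lt_tri b g) as [->|[Hbg|Hgb]].
    + destruct (Hcof g Hg) as [x [? [? Hx]]]. exists x. repeat split; auto.
    + destruct (Hcof g Hg) as [x [? [? Hx]]]. exists x. repeat split; eauto using lt_tr.
    + destruct (Hcof b Hb) as [x [? [? Hx]]]. exists x. repeat split; eauto using lt_tr.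
  - intro a.
    assert (Hn : forall b, exists c, lt b c /\ forall g, ile g b -> C g c).
    { intro b. destruct (club_pinter (fun g => ile g b) C (ile_cnt b) (fun g _ => HC g)) as [_ Hu].
      apply Hu. }
    set (nx := fun b => proj1_sig (cid (Hn b))).
    assert (Hnx : forall b, lt b (nx b) /\ forall g, ile g b -> C g (nx b)).
    { intros b. unfold nx. destruct (cid (Hn b)); auto. }
    set (s := fix s k := match k with 0 => a | S k => nx (s k) end).
    assert (Hinc : forall k, lt (s k) (s (S k))) by (intro k; apply Hnx).
    destruct (sup_seq s) as [l [Hub Hsup]].
    exists l. split; [apply (Hub 0)|].
    intros g Hg. destruct (Hsup g Hg) as [k Hk].
    apply (club_sup s l); auto. apply (HC g).
    intro k'. exists (S (k + k')). split; [lia|].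
    simpl. apply Hnx.
    destruct (Nat.eq_dec k (k + k')) as [E|NE].
    + rewrite <- E; auto.
    + left. eapply ile_lt_tr; eauto. apply incr_mono; auto. lia.
Qed.

Lemma not_stat S : ~ stationary lt S -> exists C, club lt C /\ forall a, C a -> ~ S a.
Proof.
  intro H. apply NNPP; intro H2. apply H. intros C HC.
  apply NNPP; intro H3. apply H2. exists C. split; auto. intros a Ca Sa. eauto.
Qed.

Lemma pigeon S (f : I -> nat) : stationary lt S ->
  exists n, stationary lt (fun a => S a /\ f a = n).
Proof.
  intro HS. apply NNPP; intro H.
  assert (Hn : forall n, exists C, club lt C /\ forall a, C a -> ~ (S a /\ f a = n)).
  { intro n. apply not_stat. intro. apply H; eauto. }
  set (Cf := fun n => proj1_sig (cid (Hn n))).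
  assert (HCf : forall n, club lt (Cf n) /\ forall a, Cf n a -> ~ (S a /\ f a = n)).
  { intro n. unfold Cf. destruct (cid (Hn n)); auto. }
  destruct (HS _ (club_cinter Cf (fun n => proj1 (HCf n)))) as [a [Sa Ca]].
  apply (proj2 (HCf (f a)) a (Ca (f a))). auto.
Qed.

Lemma fodor S (g : I -> I) : stationary lt S -> (forall a, S a -> lt (g a) a) ->
  exists c, stationary lt (fun a => S a /\ g a = c).
Proof.
  intros HS Hg. apply NNPP; intro H.
  assert (Hn : forall c, exists C, club lt C /\ forall a, C a -> ~ (S a /\ g a = c)).
  { intro c. apply not_stat. intro. apply H; eauto. }
  set (Cf := fun c => proj1_sig (cid (Hn c))).
  assert (HCf : forall c, club lt (Cf c) /\ forall a, Cf c a -> ~ (S a /\ g a = c)).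
  { intro c. unfold Cf. destruct (cid (Hn c)); auto. }
  destruct (HS _ (club_diag Cf (fun c => proj1 (HCf c)))) as [a [Sa Ca]].
  apply (proj2 (HCf (g a)) a (Ca (g a) (Hg a Sa))). auto.
Qed.

Lemma split2 S (A : I -> Prop) : stationary lt S ->
  stationary lt (fun a => S a /\ A a) \/ stationary lt (fun a => S a /\ ~ A a).
Proof.
  intro HS. destruct (classic (stationary lt (fun a => S a /\ A a))) as [|H]; [auto|right].
  intros C HC. destruct (not_stat _ H) as [D [HD HD']].
  destruct (HS _ (club_inter2 _ _ HC HD)) as [a [Sa [Ca Da]]].
  exists a. split; auto. split; auto. intro. apply (HD' a Da); auto.
Qed.

End Omega1.
Arguments ile {I} lt a b.

Lemma refine_all {I} (lt : I -> I -> Prop) (Q : nat -> (I -> Prop) -> Prop) (S : I -> Prop) :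
  stationary lt S ->
  (forall k S1 S2, Q k S1 -> (forall a, S2 a -> S1 a) -> Q k S2) ->
  (forall k S1, stationary lt S1 -> (forall a, S1 a -> S a) ->
     exists S2, (forall a, S2 a -> S1 a) /\ stationary lt S2 /\ Q k S2) ->
  forall m, exists S', (forall a, S' a -> S a) /\ stationary lt S' /\ forall k, k < m -> Q k S'.
Proof.
  intros HS Hdown Hstep m. induction m as [|m IH].
  - exists S. repeat split; auto. intros; lia.
  - destruct IH as [S1 [H1 [H2 H3]]].
    destruct (Hstep m S1 H2 H1) as [S2 [G1 [G2 G3]]].
    exists S2. repeat split; auto.
    intros k Hk. destruct (Nat.eq_dec k m) as [->|]; auto.
    apply (Hdown k S1); auto. apply H3. lia.
Qed.

Lemma finite_list {X} (P : X -> Prop) : finite_set P -> exists l, forall t, In t l <-> P t.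
Proof.
  intros [l Hl]. exists (filter (fun t => if emi (P t) then true else false) l).
  intro t. rewrite filter_In. destruct (emi (P t)); split; intuition; discriminate.
Qed.

Section Tree.
Variable I : Type.
Variable lt : I -> I -> Prop.
Hypothesis Hw1 : is_omega1 I lt.
Variable T : Type.
Variable tlt : T -> T -> Prop.
Hypothesis HA : aronszajn lt tlt.

Lemma t_irr t : ~ tlt t t.
Proof. destruct HA as [H _]; auto. Qed.
Lemma t_tr r s t : tlt r s -> tlt s t -> tlt r t.
Proof. destruct HA as [_ [H _]]; eauto. Qed.
Lemma t_hex t : exists a, is_height lt tlt t a.
Proof. destruct HA as [_ [_ [H _]]]; auto. Qed.
Lemma t_lvl a : countable (fun t => is_height lt tlt t a).
Proof. destruct HA as [_ [_ [_ [_ [H _]]]]]; auto. Qed.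

Lemma hu_aux t a b : is_height lt tlt t a -> is_height lt tlt t b -> lt a b -> False.
Proof.
  intros [f [f1 [f2 [f3 f4]]]] [g [g1 [g2 [g3 g4]]]] Hab.
  set (R := fun c d => exists s, tlt s t /\ g s = c /\ f s = d).
  assert (Htot : forall c, lt c b -> exists d, R c d /\ lt d a).
  { intros c Hc. destruct (g2 c Hc) as [s [Hs Es]]. exists (f s). split; auto.
    exists s; auto. }
  assert (Hmono : forall c d c' d', R c d -> R c' d' -> lt c c' -> lt d d').
  { intros c d c' d' [s [Hs [<- <-]]] [s' [Hs' [<- <-]]] H.
    apply f4; auto. apply g4; auto. }
  assert (Hcl : forall c, lt c b -> forall d, R c d -> ~ lt d c).
  { intro c. induction c as [c IH] using (well_founded_ind (ilt_wf _ _ Hw1)).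
    intros Hc d Rcd Hdc.
    assert (Hdb : lt d b) by (eapply lt_tr; eauto).
    destruct (Htot d Hdb) as [d' [Rdd' _]].
    assert (lt d' d) by (eapply Hmono; eauto).
    eapply (IH d Hdc Hdb d'); eauto. }
  destruct (Htot a Hab) as [d [Rad Hda]].
  eapply Hcl; eauto.
Qed.

Lemma h_uniq t a b : is_height lt tlt t a -> is_height lt tlt t b -> a = b.
Proof.
  intros Ha Hb. destruct (lt_tri _ _ Hw1 a b) as [|[H|H]]; auto; exfalso.
  - exact (hu_aux t a b Ha Hb H).
  - exact (hu_aux t b a Hb Ha H).
Qed.

Lemma pred_height t a f :
    (forall s, tlt s t -> lt (f s) a) ->
    (forall b, lt b a -> exists s, tlt s t /\ f s = b) ->
    (forall s s', tlt s t -> tlt s' t -> f s = f s' -> s = s') ->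
    (forall s s', tlt s t -> tlt s' t -> (tlt s s' <-> lt (f s) (f s'))) ->
  forall s, tlt s t -> is_height lt tlt s (f s).
Proof.
  intros f1 f2 f3 f4 s Hs. exists f. repeat split.
  - intros r Hr. apply f4; eauto using t_tr.
  - intros b Hb. assert (lt b a) by (eapply lt_tr; eauto).
    destruct (f2 b H) as [r [Hr Er]]. exists r. split; auto.
    apply f4; auto. congruence.
  - intros r r' Hr Hr'. apply f3; eauto using t_tr.
  - intro Hrr. apply f4; eauto using t_tr.
  - intro Hrr. apply f4; eauto using t_tr.
Qed.

Definition ht (t : T) : I := proj1_sig (cid (t_hex t)).
Lemma ht_spec t : is_height lt tlt t (ht t).
Proof. unfold ht. destruct (cid (t_hex t)); auto. Qed.
Lemma ht_eq t a : is_height lt tlt t a -> a = ht t.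
Proof. intro H. eapply h_uniq; eauto using ht_spec. Qed.

Lemma pred_ht s t : tlt s t -> lt (ht s) (ht t).
Proof.
  intro Hs. destruct (ht_spec t) as [f [f1 [f2 [f3 f4]]]].
  rewrite <- (ht_eq s (f s)); auto. eapply pred_height; eauto.
Qed.

Lemma restr_ex t b : lt b (ht t) -> exists s, tlt s t /\ ht s = b.
Proof.
  intro Hb. destruct (ht_spec t) as [f [f1 [f2 [f3 f4]]]].
  destruct (f2 b Hb) as [s [Hs Es]]. exists s. split; auto.
  subst b. symmetry. apply ht_eq. eapply pred_height; eauto.
Qed.

Lemma pred_cmp s s' u : tlt s u -> tlt s' u -> lt (ht s) (ht s') -> tlt s s'.
Proof.
  intros Hs Hs' H. destruct (ht_spec u) as [f [f1 [f2 [f3 f4]]]].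
  rewrite <- (ht_eq s (f s)), <- (ht_eq s' (f s')) in H; try (eapply pred_height; eauto).
  apply f4; auto.
Qed.

Lemma pred_eq s s' u : tlt s u -> tlt s' u -> ht s = ht s' -> s = s'.
Proof.
  intros Hs Hs' H. destruct (ht_spec u) as [f [f1 [f2 [f3 f4]]]].
  rewrite <- (ht_eq s (f s)), <- (ht_eq s' (f s')) in H; try (eapply pred_height; eauto).
  apply f3; auto.
Qed.

Definition tle s t := tlt s t \/ s = t.

Lemma cmp_le s s' w : tle s w -> tle s' w -> lt (ht s) (ht s') -> tlt s s'.
Proof.
  intros [Hs|<-] [Hs'|<-] H.
  - eapply pred_cmp; eauto.
  - auto.
  - exfalso. apply (lt_irr _ _ Hw1 (ht s)). eapply lt_tr; eauto. apply pred_ht; auto.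
  - exfalso. eapply lt_irr; eauto.
Qed.

Definition restr (t : T) (a : I) : T :=
  match emi (exists s, tle s t /\ ht s = a) with
  | left H => proj1_sig (cid H)
  | right _ => t end.

Lemma restr_spec t a : ile lt a (ht t) -> tle (restr t a) t /\ ht (restr t a) = a.
Proof.
  intro Ha. unfold restr. destruct (emi (exists s, tle s t /\ ht s = a)) as [H|H].
  - destruct (cid H); auto.
  - exfalso. apply H. destruct Ha as [Ha| ->].
    + destruct (restr_ex t a Ha) as [s [? ?]]. exists s. split; auto. left; auto.
    + exists t. split; auto. right; auto.
Qed.

Lemma lvl_cnt a : countable (fun t => ht t = a).
Proof. eapply countable_sub; [|apply (t_lvl a)]. intros t <-. apply ht_spec. Qed.


Lemma main (HSS : SS lt tlt) (E : I -> Prop) (HE : stationary lt E) (x : I -> T -> Prop)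
  (Hx : forall a, E a -> finite_set (x a) /\ antichain tlt (x a)) :
  exists E' : I -> Prop,
    (forall a, E' a -> E a) /\ stationary lt E' /\
    antichain tlt (fun t => exists a, E' a /\ x a t).
Proof.
  destruct (HE _ (club_true _ _ Hw1)) as [a0 _].
  destruct HA as [_ [_ [_ [Hlv _]]]]. destruct (Hlv a0) as [t0 _]. clear Hlv.
  set (lf := fun a => match emi (E a) with
             | left H => proj1_sig (cid (finite_list _ (proj1 (Hx a H))))
             | right _ => nil end).
  assert (Hlf : forall a, E a -> forall t, In t (lf a) <-> x a t).
  { intros a Ea. unfold lf. destruct (emi (E a)) as [H|]; [|contradiction].
    destruct (cid (finite_list _ (proj1 (Hx a H)))); auto. }
  destruct (pigeon _ _ Hw1 E (fun a => length (lf a)) HE) as [n HS0].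
  set (S0 := fun a => E a /\ length (lf a) = n) in HS0.
  set (v := fun a i => nth i (lf a) t0).
  assert (Hv1 : forall a i, S0 a -> i < n -> x a (v a i)).
  { intros a i [Ea La] Hi. apply Hlf; auto. apply nth_In. lia. }
  assert (Hv2 : forall a t, S0 a -> x a t -> exists i, i < n /\ v a i = t).
  { intros a t [Ea La] Ht. apply Hlf in Ht; auto.
    destruct (In_nth _ _ t0 Ht) as [i [Hi Ei]]. exists i. split; [lia|auto]. }
  set (Q1 := fun i (S : I -> Prop) => (exists u, forall a, S a -> v a i = u) \/
                       (forall a, S a -> ~ lt (ht (v a i)) a)).
  destruct (refine_all lt Q1 S0 HS0) with (m := n) as [S1 [S1S0 [HS1 HQ1]]].
  { intros k A B [[u Hu]|Hh] HBA; [left; exists u|right]; auto. }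
  { intros i A HA' HAS.
    destruct (split2 _ _ Hw1 A (fun a => lt (ht (v a i)) a) HA') as [HL|HH].
    - destruct (fodor _ _ Hw1 _ (fun a => ht (v a i)) HL) as [g Hg].
      { intros a [_ H]; exact H. }
      destruct (lvl_cnt g) as [e He].
      destruct (pigeon _ _ Hw1 _ (fun a => e (v a i)) Hg) as [k Hk].
      destruct (Hk _ (club_true _ _ Hw1)) as [a1 [[[[Aa1 _] Ga1] Ka1] _]].
      exists (fun a => ((A a /\ lt (ht (v a i)) a) /\ ht (v a i) = g) /\ e (v a i) = k).
      split; [intros a [[[? _] _] _]; auto|]. split; [exact Hk|].
      left. exists (v a1 i). intros a [[[Aa _] Ga] Ka]. apply He; auto; congruence.
    - exists (fun a => A a /\ ~ lt (ht (v a i)) a). split; [intros a [? _]; auto|].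
      split; auto. right. intros a [_ H]; auto. }
  set (high := fun i => forall a, S1 a -> ~ lt (ht (v a i)) a).
  set (p := fun a i => restr (v a i) a).
  assert (Hp : forall a i, S1 a -> high i -> tle (p a i) (v a i) /\ ht (p a i) = a).
  { intros a i Sa Hi. apply restr_spec. apply nlt_ile; auto. }
  set (Q2 := fun i (S : I -> Prop) => high i ->
               forall a b, S a -> S b -> a <> b -> ~ tlt (p a i) (p b i)).
  destruct (refine_all lt Q2 S1 HS1) with (m := n) as [S2 [S2S1 [HS2 HQ2]]].
  { intros k A B HA' HBA Hk a b Ba Bb. apply HA'; auto. }
  { intros i A HA' HAS.
    destruct (classic (high i)) as [Hi|Hi]; [|exists A; repeat split; auto; intro; contradiction].
    set (X := fun t => exists a, A a /\ t = p a i).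
    assert (HX : stationary_in_tree lt tlt X).
    { eapply stat_mono; [|exact HA']. intros a Aa. exists (p a i). split; [exists a; auto|].
      destruct (Hp a i (HAS a Aa) Hi) as [_ E1]. rewrite <- E1 at 2. apply ht_spec. }
    destruct (HSS X HX) as [Y [YX [HY HYs]]].
    exists (fun a => A a /\ Y (p a i)). split; [intros a [? _]; auto|]. split.
    - eapply stat_mono; [|exact HYs]. intros b [t [Yt Hb]].
      destruct (YX t Yt) as [a [Aa Et]]. subst t.
      destruct (Hp a i (HAS a Aa) Hi) as [_ E1].
      assert (b = a) by (rewrite <- E1; apply ht_eq; auto). subst b. auto.
    - intros _ a b [Aa Ya] [Ab Yb] Hab. refine (proj1 (HY _ _ Ya Yb _)).
      intro E2. apply Hab. destruct (Hp a i (HAS a Aa) Hi) as [_ E1].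
      destruct (Hp b i (HAS b Ab) Hi) as [_ E3]. congruence. }
  set (Q3 := fun i j (S : I -> Prop) => high i -> high j ->
         (forall a, S a -> forall s, tlt s (p a j) -> tlt s (p a i)) \/
         (exists c, forall a, S a -> tlt c (p a j) /\ ~ tlt c (p a i))).
  assert (Q3down : forall i j A B, Q3 i j A -> (forall a, B a -> A a) -> Q3 i j B).
  { intros i j A B HA' HBA Hi Hj. destruct (HA' Hi Hj) as [H|[c H]]; [left|right; exists c]; auto. }
  assert (Q3step : forall i j S, stationary lt S -> (forall a, S a -> S2 a) ->
     exists S', (forall a, S' a -> S a) /\ stationary lt S' /\ Q3 i j S').
  { intros i j A HA' HAS.
    destruct (classic (high i /\ high j)) as [[Hi Hj]|Hij];
      [|exists A; repeat split; auto; intros Hi Hj; exfalso; auto].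
    assert (HA1 : forall a, A a -> S1 a) by (intros a Aa; apply S2S1, HAS, Aa).
    destruct (split2 _ _ Hw1 A (fun a => forall s, tlt s (p a j) -> tlt s (p a i)) HA') as [HL|HH].
    - exists (fun a => A a /\ forall s, tlt s (p a j) -> tlt s (p a i)).
      split; [intros a [? _]; auto|]. split; auto. intros _ _. left. intros a [_ H]; auto.
    - set (sel := fun a => match emi (exists s, tlt s (p a j) /\ ~ tlt s (p a i)) with
                   | left H => proj1_sig (cid H) | right _ => t0 end).
      assert (Hsel : forall a, A a -> ~ (forall s, tlt s (p a j) -> tlt s (p a i)) ->
                     tlt (sel a) (p a j) /\ ~ tlt (sel a) (p a i)).
      { intros a Aa Hn. unfold sel. destruct (emi _) as [H|H].
        - destruct (cid H); auto.
        - exfalso. apply Hn. intros s Hs. apply NNPP. intro. apply H. eauto. }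
      destruct (fodor _ _ Hw1 _ (fun a => ht (sel a)) HH) as [g Hg].
      { intros a [Aa Hn]. destruct (Hsel a Aa Hn) as [H1 _].
        destruct (Hp a j (HA1 a Aa) Hj) as [_ E1]. rewrite <- E1 at 2. apply pred_ht; auto. }
      destruct (lvl_cnt g) as [e He].
      destruct (pigeon _ _ Hw1 _ (fun a => e (sel a)) Hg) as [k Hk].
      destruct (Hk _ (club_true _ _ Hw1)) as [a1 [[[[Aa1 Na1] Ga1] Ka1] _]].
      exists (fun a => ((A a /\ ~ (forall s, tlt s (p a j) -> tlt s (p a i))) /\ ht (sel a) = g) /\ e (sel a) = k).
      split; [intros a [[[? _] _] _]; auto|]. split; [exact Hk|].
      intros _ _. right. exists (sel a1). intros a [[[Aa Na] Ga] Ka].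
      assert (Es : sel a = sel a1) by (apply He; auto; congruence).
      rewrite <- Es. apply Hsel; auto. }
  destruct (refine_all lt (fun i S => forall j, j < n -> Q3 i j S) S2 HS2) with (m := n)
    as [S3 [S3S2 [HS3 HQ3]]].
  { intros k A B HA' HBA j Hj. eapply Q3down; eauto. }
  { intros i A HA' HAS.
    destruct (refine_all lt (Q3 i) A HA') with (m := n) as [B [BA [HB HQB]]].
    - intros; eapply Q3down; eauto.
    - intros j C HC HCA. apply Q3step; auto.
    - exists B. auto. }
  assert (HS31 : forall a, S3 a -> S1 a) by (intros; apply S2S1, S3S2; auto).
  exists S3. split; [intros a H3; destruct (S1S0 a (HS31 a H3)); auto|].
  split; [exact HS3|].
  assert (contra : forall i j a b, i < n -> j < n -> high i -> high j -> S3 a -> S3 b ->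
            tlt (p a i) (p b j) -> False).
  { intros i j a b Hi Hj Hhi Hhj Sa Sb Hlt.
    destruct (Hp a i (HS31 a Sa) Hhi) as [_ Ea].
    destruct (Hp b j (HS31 b Sb) Hhj) as [_ Eb].
    destruct (HQ3 i Hi j Hj Hhi Hhj) as [H|[c H]].
    - assert (Hab : a <> b).
      { intro Eab. assert (Hl := pred_ht _ _ Hlt). rewrite Ea, Eb in Hl. subst b.
        exact (lt_irr _ _ Hw1 a Hl). }
      apply (HQ2 i Hi Hhi a b (S3S2 a Sa) (S3S2 b Sb) Hab). apply (H b Sb); auto.
    - destruct (H a Sa) as [H1 H2]. destruct (H b Sb) as [H3 _].
      apply H2. apply (pred_cmp c (p a i) (p b j)); auto.
      destruct (Hp a j (HS31 a Sa) Hhj) as [_ Eaj]. rewrite Ea, <- Eaj at 1. apply pred_ht; auto. }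
  assert (key : forall a b t t', S3 a -> S3 b -> x a t -> x b t' -> t <> t' -> ~ tlt t t').
  { intros a b t t' Sa Sb Ht Ht' Ne Hlt.
    assert (S0a := S1S0 a (HS31 a Sa)). assert (S0b := S1S0 b (HS31 b Sb)).
    destruct (classic (a = b)) as [Eab|Nab].
    - subst b. destruct (proj2 (Hx a (proj1 S0a)) t t' Ht Ht' Ne) as [H _]. auto.
    - destruct (Hv2 a t S0a Ht) as [i [Hi Ei]]. destruct (Hv2 b t' S0b Ht') as [j [Hj Ej]].
      subst t t'.
      destruct (HQ1 i Hi) as [[u Hu]|Hhi].
      + assert (Hxb : x b (v a i)).
        { rewrite (Hu a (HS31 a Sa)), <- (Hu b (HS31 b Sb)); apply Hv1; auto. }
        destruct (proj2 (Hx b (proj1 S0b)) _ _ Hxb Ht' Ne) as [H' _]. auto.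
      + destruct (HQ1 j Hj) as [[u Hu]|Hhj].
        * assert (Hxa : x a (v b j)).
          { rewrite (Hu b (HS31 b Sb)), <- (Hu a (HS31 a Sa)); apply Hv1; auto. }
          destruct (proj2 (Hx a (proj1 S0a)) _ _ Ht Hxa Ne) as [H' _]. auto.
        * destruct (Hp a i (HS31 a Sa) Hhi) as [Pa Ea].
          destruct (Hp b j (HS31 b Sb) Hhj) as [Pb Eb].
          assert (Pa' : tle (p a i) (v b j)).
          { left. destruct Pa as [Pa|Pa]; [eapply t_tr; eauto|rewrite Pa; auto]. }
          destruct (lt_tri _ _ Hw1 a b) as [Eab|[Hab|Hba]]; [contradiction| |].
          -- apply (contra i j a b); auto.
             apply (cmp_le (p a i) (p b j) (v b j)); [exact Pa'|exact Pb|rewrite Ea, Eb; exact Hab].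
          -- apply (contra j i b a); auto.
             apply (cmp_le (p b j) (p a i) (v b j)); [exact Pb|exact Pa'|rewrite Eb, Ea; exact Hba]. }
  intros t t' [a [Sa Ht]] [b [Sb Ht']] Ne. split.
  - exact (key a b t t' Sa Sb Ht Ht' Ne).
  - exact (key b a t' t Sb Sa Ht' Ht (fun E => Ne (eq_sym E))).
Qed.
End Tree.

Theorem lemma4 (I : Type) (lt : I -> I -> Prop) (T : Type)
  (tlt : T -> T -> Prop)
  (Hw1 : is_omega1 I lt) (HA : aronszajn lt tlt) (HSS : SS lt tlt)
  (E : I -> Prop) (HE : stationary lt E)
  (x : I -> T -> Prop)
  (Hx : forall a, E a -> finite_set (x a) /\ antichain tlt (x a)) :
  exists E' : I -> Prop,
    (forall a, E' a -> E a) /\ stationary lt E' /\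
    antichain tlt (fun t => exists a, E' a /\ x a t).
Proof.
  exact (main I lt Hw1 T tlt HA HSS E HE x Hx).
Qed.
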